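(* There exists a sequence $\{a_n\}_{n\geq 0}$ with $a_n\in\{0,1\}$ for all $n$ such that $\{a^*_n\}_{n\geq 0}$ converges to $0$ and $\{a^p_n\}_{n\geq 0}$ diverges for every $0<p<1$.
   Context: For a real sequence $\{a_n\}_{n\geq0}$ and $0<p<1$, $a^*_n=\frac{1}{n+1}\sum_{i=0}^n a_i$ and $a^p_n=\sum_{i=0}^n\binom{n}{i}p^i(1-p)^{n-i}a_i$. *)

(* Defs.v *)
From Stdlib Require Import Reals.
Open Scope R_scope.

Definition cesaro (a : nat -> R) (n : nat) : R :=
  / INR (n + 1) * sum_f_R0 a n.

Definition euler_mean (p : R) (a : nat -> R) (n : nat) : R :=
  sum_f_R0 (fun i => Binomial.C n i * p ^ i * (1 - p) ^ (n - i) * a i) n.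

(* Main.v *)
Require Import Defs.
From Stdlib Require Import Reals Lia Lra Psatz ZArith.
Open Scope R_scope.

Fixpoint E (p : R) (n : nat) (f : nat -> R) : R :=
  match n with
  | O => f O
  | S n' => E p n' (fun i => p * f (S i) + (1 - p) * f i)
  end.

Lemma E_ext p n : forall f g, (forall i, f i = g i) -> E p n f = E p n g.
Proof.
  induction n as [|n IH]; intros f g H; simpl; [apply H|].
  apply IH; intro i; rewrite !H; reflexivity.
Qed.

Lemma E_lin p n : forall f g x y,
  E p n (fun i => x * f i + y * g i) = x * E p n f + y * E p n g.
Proof.
  induction n as [|n IH]; intros f g x y; simpl; [reflexivity|].
  rewrite <- IH. apply E_ext; intro i; ring.
Qed.

Lemma E_mono p n : 0 <= p <= 1 -> forall f g, (forall i, f i <= g i) -> E p n f <= E p n g.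
Proof.
  intro Hp; induction n as [|n IH]; intros f g H; simpl; [apply H|].
  apply IH; intro i. pose proof (H i); pose proof (H (S i)). nra.
Qed.

Lemma E_const p n c : E p n (fun _ => c) = c.
Proof.
  revert c; induction n as [|n IH]; intro c; simpl; [reflexivity|].
  transitivity (E p n (fun _ => c)); [apply E_ext; intro; ring | apply IH].
Qed.

Lemma E_var p n : E p n (fun i => (INR i - INR n * p)^2) = INR n * p * (1 - p).
Proof.
  induction n as [|n IH]; [simpl; ring|]. cbn [E]. rewrite S_INR.
  - transitivity (E p n (fun i => 1 * (INR i - INR n * p)^2 + (p * (1-p)) * 1)).
    + apply E_ext; intro i. rewrite !S_INR. ring.
    + rewrite E_lin, IH, E_const. ring.
Qed.

Definition Cb (n i : nat) : R := if (i <=? n)%nat then Binomial.C n i else 0.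

Lemma C_nn n : Binomial.C n n = 1.
Proof. unfold Binomial.C. rewrite Nat.sub_diag. simpl. field. apply INR_fact_neq_0. Qed.
Lemma C_n0 n : Binomial.C n 0 = 1.
Proof. unfold Binomial.C. rewrite Nat.sub_0_r. simpl. field. apply INR_fact_neq_0. Qed.

Lemma Cb_pascal n i : Cb (S n) (S i) = Cb n i + Cb n (S i).
Proof.
  unfold Cb. destruct (Nat.lt_total i n) as [H|[H|H]].
  - rewrite (proj2 (Nat.leb_le _ _)) by lia. rewrite (proj2 (Nat.leb_le i n)) by lia.
    rewrite (proj2 (Nat.leb_le (S i) n)) by lia. symmetry; apply Binomial.pascal; auto.
  - subst i. rewrite (proj2 (Nat.leb_le _ _)) by lia. rewrite (proj2 (Nat.leb_le n n)) by lia.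
    rewrite (proj2 (Nat.leb_gt (S n) n)) by lia. rewrite !C_nn. ring.
  - rewrite !(proj2 (Nat.leb_gt _ _)) by lia. ring.
Qed.

Lemma Cb_0 n : Cb n 0 = 1.
Proof. unfold Cb. simpl. apply C_n0. Qed.
Lemma Cb_big n i : (n < i)%nat -> Cb n i = 0.
Proof. intro H. unfold Cb. rewrite (proj2 (Nat.leb_gt _ _)) by lia. reflexivity. Qed.

Lemma sum_scal_l x An N : sum_f_R0 (fun i => x * An i) N = x * sum_f_R0 An N.
Proof. induction N; simpl; [ring| rewrite IHN; ring]. Qed.

Definition W p n f := sum_f_R0 (fun i => Cb n i * p ^ i * (1 - p) ^ (n - i) * f i) n.

Lemma W_step p n f : W p (S n) f = W p n (fun i => p * f (S i) + (1 - p) * f i).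
Proof.
  unfold W. rewrite decomp_sum by lia. simpl pred.
  set (q := 1 - p).
  rewrite (sum_eq _ (fun i => p * (Cb n i * p ^ i * q ^ (n - i) * f (S i)) +
      q * (Cb n (S i) * p ^ (S i) * q ^ (n - S i) * f (S i)))).
  2:{ intros i Hi. rewrite Cb_pascal. replace (S n - S i)%nat with (n - i)%nat by lia.
      destruct (Nat.eq_dec i n) as [->|Hne].
      - rewrite (Cb_big n (S n)) by lia. simpl. ring.
      - replace (n - i)%nat with (S (n - S i)) by lia. simpl. ring. }
  rewrite plus_sum, !sum_scal_l.
  rewrite (sum_eq (fun i => Cb n i * p ^ i * q ^ (n - i) * (p * f (S i) + q * f i))
     (fun i => p * (Cb n i * p ^ i * q ^ (n - i) * f (S i)) + q * (Cb n i * p ^ i * q ^ (n - i) * f i)))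
    by (intros; ring).
  rewrite plus_sum, !sum_scal_l.
  assert (Hq : sum_f_R0 (fun i => Cb n i * p ^ i * q ^ (n - i) * f i) (S n) =
     sum_f_R0 (fun i => Cb n i * p ^ i * q ^ (n - i) * f i) n).
  { rewrite tech5, Cb_big by lia. ring. }
  rewrite <- Hq. rewrite (decomp_sum _ (S n)) by lia. simpl pred.
  rewrite Cb_0, Cb_0. rewrite Nat.sub_0_r. simpl. rewrite ?Nat.sub_0_r. ring.
Qed.

Lemma W_E p n : forall f, W p n f = E p n f.
Proof.
  induction n as [|n IH]; intro f.
  - unfold W. simpl. rewrite Cb_0. ring.
  - rewrite W_step, IH. reflexivity.
Qed.

Lemma euler_E p a n : euler_mean p a n = E p n a.
Proof.
  rewrite <- W_E. unfold euler_mean, W. apply sum_eq. intros i Hi.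
  unfold Cb. rewrite (proj2 (Nat.leb_le _ _)) by lia. reflexivity.
Qed.

Definition kk (i : nat) : nat := (Nat.log2 i / 4)%nat.
Definition a (i : nat) : R := if (i <? 16^(kk i) + 2*8^(kk i))%nat then 1 else 0.

Lemma p16 k : (16^k = 2^(4*k))%nat.
Proof. rewrite Nat.pow_mul_r. reflexivity. Qed.

Lemma kk_spec k i : (16^k <= i < 16^(S k))%nat -> kk i = k.
Proof.
  intro H. rewrite !p16 in H. assert (Hi : (0 < i)%nat).
  { pose proof (Nat.pow_nonzero 2 (4*k)). lia. }
  pose proof (proj1 (Nat.log2_le_pow2 i (4*k) Hi) (proj1 H)).
  pose proof (proj1 (Nat.log2_lt_pow2 i (4*S k) Hi) (proj2 H)).
  unfold kk. symmetry. apply (Nat.div_unique _ 4 k (Nat.log2 i - 4*k)); lia.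
Qed.

Lemma kk_bounds i : (0 < i)%nat -> (16^(kk i) <= i < 16^(S (kk i)))%nat.
Proof.
  intro Hi. pose proof (Nat.log2_spec i Hi). rewrite !p16. unfold kk.
  split.
  - eapply Nat.le_trans; [|apply H]. apply Nat.pow_le_mono_r; [lia|].
    pose proof (Nat.mul_div_le (Nat.log2 i) 4). lia.
  - eapply Nat.lt_le_trans; [apply H|]. apply Nat.pow_le_mono_r; [lia|].
    pose proof (Nat.mod_upper_bound (Nat.log2 i) 4). pose proof (Nat.div_mod_eq (Nat.log2 i) 4). lia.
Qed.

Lemma p8le k : (8^k <= 16^k)%nat.
Proof. apply Nat.pow_le_mono_l. lia. Qed.

Lemma p16S k : (16^S k = 16 * 16^k)%nat.
Proof. rewrite Nat.pow_succ_r'. reflexivity. Qed.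
Lemma p8S k : (8^S k = 8 * 8^k)%nat.
Proof. rewrite Nat.pow_succ_r'. reflexivity. Qed.

Lemma a_one k i : (16^k <= i < 16^k + 2*8^k)%nat -> a i = 1.
Proof.
  intro H. unfold a. rewrite (kk_spec k i).
  - rewrite (proj2 (Nat.ltb_lt _ _)) by lia. reflexivity.
  - pose proof (p8le k). rewrite p16S. lia.
Qed.

Lemma a_zero k i : (16^k + 2*8^k <= i < 16^(S k))%nat -> a i = 0.
Proof.
  intro H. unfold a. rewrite (kk_spec k i) by lia.
  rewrite (proj2 (Nat.ltb_ge _ _)) by lia. reflexivity.
Qed.

Lemma a01 i : a i = 0 \/ a i = 1.
Proof. unfold a. destruct (_ <? _)%nat; auto. Qed.

Lemma a_bnd i : 0 <= a i <= 1.
Proof. destruct (a01 i) as [H|H]; rewrite H; lra. Qed.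

Definition Sm n := sum_f_R0 a n.

Lemma Sm_le b j : Sm (b + j) <= Sm b + INR j.
Proof.
  induction j as [|j IH].
  - rewrite Nat.add_0_r. simpl. lra.
  - replace (b + S j)%nat with (S (b + j)) by lia. unfold Sm in *. rewrite tech5, S_INR.
    pose proof (a_bnd (S (b + j))). lra.
Qed.

Lemma Sm_const b j : (forall i, (b < i <= b + j)%nat -> a i = 0) -> Sm (b + j) = Sm b.
Proof.
  induction j as [|j IH]; intro H.
  - rewrite Nat.add_0_r. reflexivity.
  - replace (b + S j)%nat with (S (b + j)) by lia. unfold Sm in *. rewrite tech5, IH.
    + rewrite H by lia. ring.
    + intros; apply H; lia.
Qed.

Lemma INR2 x : INR (2 * x) = 2 * INR x.
Proof. rewrite mult_INR. simpl. ring. Qed.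

Lemma Sm_block k n : (16^k <= n < 16^(S k))%nat -> Sm n <= Sm (16^k - 1) + 2 * INR (8^k).
Proof.
  intro H. pose proof (Nat.pow_nonzero 16 k).
  assert (Hc : forall m, (16^k <= m < 16^k + 2*8^k)%nat -> Sm m <= Sm (16^k - 1) + 2 * INR (8^k)).
  { intros m Hm. replace m with ((16^k - 1) + (m - (16^k - 1)))%nat by lia.
    eapply Rle_trans; [apply Sm_le|]. apply Rplus_le_compat_l. rewrite <- INR2.
    apply le_INR. lia. }
  destruct (Nat.lt_ge_cases n (16^k + 2*8^k)).
  - apply Hc; lia.
  - pose proof (Nat.pow_nonzero 8 k).
    replace n with ((16^k + 2*8^k - 1) + (n - (16^k + 2*8^k - 1)))%nat by lia.
    rewrite Sm_const.
    + apply Hc; lia.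
    + intros i Hi. apply (a_zero k). lia.
Qed.

Lemma Sm_pow k : Sm (16^k - 1) <= INR (8^k).
Proof.
  induction k as [|k IH].
  - simpl. unfold Sm. simpl. pose proof (a_bnd 0). lra.
  - pose proof (Nat.pow_nonzero 16 k).
    eapply Rle_trans; [apply (Sm_block k)|].
    + rewrite p16S. lia.
    + rewrite p8S, mult_INR. replace (INR 8) with 8 by (simpl; ring).
      pose proof (pos_INR (8^k)). lra.
Qed.

Lemma Sm_bound n : (0 < n)%nat -> Sm n <= 3 * INR (8^(kk n)).
Proof.
  intro Hn. pose proof (kk_bounds n Hn).
  eapply Rle_trans; [apply (Sm_block (kk n)); auto|].
  pose proof (Sm_pow (kk n)). lra.
Qed.
Lemma p16_28 k : (16^k = 8^k * 2^k)%nat.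
Proof. rewrite <- Nat.pow_mul_l. reflexivity. Qed.

Lemma ratio_bnd A X Y s : 0 < A -> 0 < X -> 0 < Y -> s <= 3 * X -> X * Y <= A -> / A * s <= 3 / Y.
Proof.
  intros HA HX HY Hs HXY.
  assert (u : / A * A = 1) by (field; lra). assert (v : / Y * Y = 1) by (field; lra).
  pose proof (Rinv_0_lt_compat _ HA). pose proof (Rinv_0_lt_compat _ HY).
  unfold Rdiv.
  assert (X <= A * / Y) by nra.
  nra.
Qed.

Lemma cesaro_a : Un_cv (cesaro a) 0.
Proof.
  intros eps Heps.
  destruct (archimed_cor1 (eps / 3)) as [K [HK1 HK2]]; [lra|].
  exists (16^K)%nat. intros n Hn. unfold R_dist. rewrite Rminus_0_r.
  pose proof (Nat.pow_nonzero 16 K).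
  assert (Hn0 : (0 < n)%nat) by lia.
  pose proof (kk_bounds n Hn0) as Hb. set (k := kk n) in *.
  assert (HKk : (K <= k)%nat).
  { assert (16^K < 16^(S k))%nat by lia. apply Nat.pow_lt_mono_r_iff in H0; lia. }
  assert (H0c : 0 <= cesaro a n).
  { unfold cesaro. apply Rmult_le_pos.
    - left. apply Rinv_0_lt_compat. apply lt_0_INR. lia.
    - apply cond_pos_sum. intro; apply a_bnd. }
  rewrite Rabs_pos_eq by auto.
  assert (HY : INR (2^k) >= INR K).
  { apply Rle_ge, le_INR. pose proof (Nat.pow_gt_lin_r 2 k). pose proof (Nat.pow_le_mono_r 2 K k). lia. }
  assert (HKp : 0 < INR K) by (apply lt_0_INR; lia).
  apply Rle_lt_trans with (3 / INR (2^k)).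
  - unfold cesaro. apply ratio_bnd with (X := INR (8^k)).
    + apply lt_0_INR. lia.
    + apply lt_0_INR. pose proof (Nat.pow_nonzero 8 k). lia.
    + lra.
    + apply (Sm_bound n Hn0).
    + rewrite <- mult_INR, <- p16_28. apply le_INR. lia.
  - unfold Rdiv. assert (/ INR (2^k) <= / INR K) by (apply Rinv_le_contravar; lra). lra.
Qed.

Lemma find_n c p : 0 < p <= 1 -> 0 <= c -> exists n : nat, c < INR n * p <= c + 1.
Proof.
  intros Hp Hc. destruct (archimed (c / p)) as [H1 H2].
  set (z := up (c / p)) in *.
  assert (Hcp : 0 <= c / p) by (unfold Rdiv; apply Rmult_le_pos; [lra| left; apply Rinv_0_lt_compat; lra]).
  assert (Hz : (0 <= z)%Z) by (apply le_IZR; lra).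
  exists (Z.to_nat z). rewrite INR_IZR_INZ, Z2Nat.id by auto.
  assert (c = c / p * p) by (field; lra).
  split; nra.
Qed.

Lemma INR_pow_2 k m : INR ((2^k)^m) = INR (2^k) ^ m.
Proof. apply pow_INR. Qed.

Lemma sq_lt d t : 0 < t -> d^2 < t^2 -> - t < d < t.
Proof.
  intros Ht H. split.
  - destruct (Rlt_or_le (-t) d); auto. nra.
  - destruct (Rlt_or_le d t); auto. nra.
Qed.

Lemma E_high p n t : 0 < p < 1 -> 0 < t ->
  (forall i:nat, INR n * p - t < INR i < INR n * p + t -> a i = 1) ->
  E p n a >= 1 - INR n * p * (1 - p) / (t^2).
Proof.
  intros Hp Ht H.
  assert (Ht2 : 0 < t^2) by nra.
  set (v := / t^2). assert (Hv : v * t^2 = 1) by (unfold v; field; lra).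
  assert (Hv0 : 0 < v) by (apply Rinv_0_lt_compat; lra).
  apply Rle_ge. replace (1 - INR n * p * (1 - p) / t ^ 2) with
    (E p n (fun i => 1 * 1 + (- v) * (INR i - INR n * p)^2)).
  - apply E_mono; [lra|]. intro i.
    destruct (Rlt_or_le ((INR i - INR n * p)^2) (t^2)) as [Hl|Hl].
    + apply sq_lt in Hl; auto. rewrite H by lra. pose proof (pow2_ge_0 (INR i - INR n * p)). nra.
    + pose proof (a_bnd i). nra.
  - rewrite (E_lin p n (fun _ => 1) (fun i => (INR i - INR n * p)^2) 1 (-v)), E_const, E_var. unfold Rdiv. fold v. ring.
Qed.

Lemma E_low p n t : 0 < p < 1 -> 0 < t ->
  (forall i:nat, INR n * p - t < INR i < INR n * p + t -> a i = 0) ->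
  E p n a <= INR n * p * (1 - p) / (t^2).
Proof.
  intros Hp Ht H.
  assert (Ht2 : 0 < t^2) by nra.
  set (v := / t^2). assert (Hv : v * t^2 = 1) by (unfold v; field; lra).
  assert (Hv0 : 0 < v) by (apply Rinv_0_lt_compat; lra).
  replace (INR n * p * (1 - p) / t ^ 2) with
    (E p n (fun i => 0 * 1 + v * (INR i - INR n * p)^2)).
  - apply E_mono; [lra|]. intro i.
    destruct (Rlt_or_le ((INR i - INR n * p)^2) (t^2)) as [Hl|Hl].
    + apply sq_lt in Hl; auto. rewrite H by lra. pose proof (pow2_ge_0 (INR i - INR n * p)). nra.
    + pose proof (a_bnd i). nra.
  - rewrite (E_lin p n (fun _ => 1) (fun i => (INR i - INR n * p)^2) 0 v), E_const, E_var. unfold Rdiv. fold v. ring.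
Qed.

Lemma INR16 k : INR (16^k) = INR (2^k) ^ 4.
Proof. rewrite <- pow_INR. f_equal. rewrite <- Nat.pow_mul_r, Nat.mul_comm, Nat.pow_mul_r. reflexivity. Qed.
Lemma INR8 k : INR (8^k) = INR (2^k) ^ 3.
Proof. rewrite <- pow_INR. f_equal. rewrite <- Nat.pow_mul_r, Nat.mul_comm, Nat.pow_mul_r. reflexivity. Qed.

Lemma diverge p : 0 < p < 1 -> ~ (exists l : R, Un_cv (euler_mean p a) l).
Proof.
  intros Hp [l Hl].
  destruct (Hl (1/4)) as [N HN]; [lra|].
  set (k := (N + 2)%nat).
  set (M := INR (2^k)).
  assert (HM4 : 4 <= M).
  { unfold M. replace 4 with (INR (2^2)) by (simpl; ring). apply le_INR.
    apply Nat.pow_le_mono_r; unfold k; lia. }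
  assert (HM3p : 0 <= M^3) by (apply pow_le; lra).
  assert (HM4p : 0 <= M^4) by (apply pow_le; lra).
  assert (HN16 : INR N <= M^4).
  { unfold M. rewrite <- INR16. apply le_INR. pose proof (Nat.pow_gt_lin_r 16 N).
    pose proof (Nat.pow_le_mono_r 16 N k). unfold k in *. lia. }
  assert (HN0 : 0 <= INR N) by apply pos_INR.
  destruct (find_n (M^4 + M^3) p) as [nh [Hh1 Hh2]]; [lra| nra |].
  assert (Hnh : (N <= nh)%nat).
  { apply INR_le. assert (INR nh * p <= INR nh) by (pose proof (pos_INR nh); nra). nra. }
  assert (Eh : E p nh a >= 1 - INR nh * p * (1 - p) / ((M^3 - 1)^2)).
  { apply E_high; [lra| nra |]. intros i Hi. apply (a_one k).
    split.
    - apply INR_le. rewrite INR16. fold M. lra.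
    - apply INR_lt. rewrite plus_INR, INR2, INR16, INR8. fold M. lra. }
  assert (Eh' : E p nh a > 3/4).
  { assert (HT : 4 * (M^4 + M^3 + 1) < (M^3 - 1)^2).
    { assert (M^3 >= 64) by nra. assert (M^4 >= 4 * M^3) by nra. nra. }
    assert (INR nh * p * (1 - p) <= M^4 + M^3 + 1) by (assert (0 <= INR nh * p) by lra; assert (INR nh * p * (1 - p) <= INR nh * p) by (rewrite <- (Rmult_1_r (INR nh * p)) at 2; apply Rmult_le_compat_l; lra); lra).
    assert (0 < (M^3 - 1)^2) by nra.
    assert (INR nh * p * (1 - p) / (M^3 - 1)^2 < 1/4).
    { apply Rmult_lt_reg_r with ((M^3 - 1)^2); auto. unfold Rdiv.
      rewrite Rmult_assoc, Rinv_l by lra. lra. }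
    lra. }
  destruct (find_n (8 * M^4) p) as [nl [Hl1 Hl2]]; [lra| nra |].
  assert (Hnl : (N <= nl)%nat).
  { apply INR_le. assert (INR nl * p <= INR nl) by (pose proof (pos_INR nl); nra). nra. }
  assert (El : E p nl a <= INR nl * p * (1 - p) / ((4 * M^4 - 1)^2)).
  { apply E_low; [lra| nra |]. intros i Hi. apply (a_zero k).
    split.
    - apply INR_le. rewrite plus_INR, INR2, INR16, INR8. fold M. nra.
    - apply INR_lt. rewrite p16S, mult_INR, INR16. fold M.
      replace (INR 16) with 16 by (simpl; ring). nra. }
  assert (El' : E p nl a < 1/4).
  { assert (HT : 4 * (8 * M^4 + 1) < (4 * M^4 - 1)^2).
    { assert (M^4 >= 256) by nra. nra. }
    assert (INR nl * p * (1 - p) <= 8 * M^4 + 1) by (assert (0 <= INR nl * p) by lra; assert (INR nl * p * (1 - p) <= INR nl * p) by (rewrite <- (Rmult_1_r (INR nl * p)) at 2; apply Rmult_le_compat_l; lra); lra).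
    assert (0 < (4 * M^4 - 1)^2) by nra.
    assert (INR nl * p * (1 - p) / (4 * M^4 - 1)^2 < 1/4).
    { apply Rmult_lt_reg_r with ((4 * M^4 - 1)^2); auto. unfold Rdiv.
      rewrite Rmult_assoc, Rinv_l by lra. lra. }
    lra. }
  pose proof (HN nh Hnh) as A1. pose proof (HN nl Hnl) as A2.
  unfold R_dist in A1, A2. rewrite euler_E in A1, A2.
  apply Rabs_def2 in A1. apply Rabs_def2 in A2. lra.
Qed.

Theorem proposition4 :
  exists a : nat -> R,
    (forall n, a n = 0 \/ a n = 1) /\
    Un_cv (cesaro a) 0 /\
    (forall p : R, 0 < p < 1 -> ~ (exists l : R, Un_cv (euler_mean p a) l)).
Proof.
  exists a. split; [exact a01|]. split; [exact cesaro_a|]. exact diverge.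
Qed.
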